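(* Let $(\mathfrak g,[-,-]_{\mathfrak g})$ be a Lie algebra, $(\rho,V)$ a representation of it, and $T:V\to\mathfrak g$ an anti-$\mathcal O$-operator of $(\mathfrak g,[-,-]_{\mathfrak g})$ associated to $(\rho,V)$. Define $\circ:V\otimes V\to V$ by $u\circ v=-\rho(T(u))v$. Then $(V,\circ)$ satisfies $u\circ(v\circ w)-v\circ(u\circ w)=[v,u]\circ w$ for all $u,v,w\in V$, where $[u,v]=u\circ v-v\circ u$. Moreover, $(V,\circ)$ is an anti-pre-Lie algebra (in particular Lie-admissible) if and only if $T$ is strong. In this case, $T$ is a homomorphism of Lie algebras from $(V,[-,-])$ to $(\mathfrak g,[-,-]_{\mathfrak g})$; furthermore, $T(u)\circ_{\mathfrak g}T(v)=T(u\circ v)$ ($u,v\in V$) defines an anti-pre-Lie algebra structure on $T(V)\subset\mathfrak g$, and $T$ is a homomorphism of anti-pre-Lie algebras from $(V,\circ)$ to $(T(V),\circ_{\mathfrak g})$.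
   Context: All vector spaces are finite-dimensional over a field $\mathbb F$ of characteristic $0$. An anti-pre-Lie algebra is a vector space $A$ with a bilinear operation $\circ$ such that, writing $[x,y]=x\circ y-y\circ x$, for all $x,y,z\in A$: (i) $x\circ(y\circ z)-y\circ(x\circ z)=[y,x]\circ z$, and (ii) $[x,y]\circ z+[y,z]\circ x+[z,x]\circ y=0$. A linear map $T:V\to\mathfrak g$ is an anti-$\mathcal O$-operator associated to a representation $(\rho,V)$ if $[T(u),T(v)]_{\mathfrak g}=T(\rho(T(v))u-\rho(T(u))v)$ for all $u,v\in V$; it is strong if moreover $\rho([T(u),T(v)]_{\mathfrak g})w+\rho([T(v),T(w)]_{\mathfrak g})u+\rho([T(w),T(u)]_{\mathfrak g})v=0$ for all $u,v,w\in V$. *)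

(* Defs.v *)
From HB Require Import structures.
From mathcomp Require Import all_boot all_algebra.
Set Implicit Arguments. Unset Strict Implicit. Unset Printing Implicit Defensive.
Import GRing.Theory.
Local Open Scope ring_scope.

Section Defs.
Variable F : fieldType.

Section OnSpace.
Variable A : lmodType F.

Definition bilinear_op (op : A -> A -> A) : Prop :=
  (forall (a : F) x y z, op (a *: x + y) z = a *: op x z + op y z) /\
  (forall (a : F) x y z, op x (a *: y + z) = a *: op x y + op x z).

Definition is_lie_bracket (br : A -> A -> A) : Prop :=
  [/\ bilinear_op br,
      (forall x, br x x = 0) &
      (forall x y z, br x (br y z) + br y (br z x) + br z (br x y) = 0)].

Definition commutator (op : A -> A -> A) (x y : A) : A := op x y - op y x.

Definition anti_pre_Lie_id1 (op : A -> A -> A) : Prop :=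
  forall x y z, op x (op y z) - op y (op x z) = op (commutator op y x) z.

Definition anti_pre_Lie_id2 (op : A -> A -> A) : Prop :=
  forall x y z, op (commutator op x y) z + op (commutator op y z) x
                + op (commutator op z x) y = 0.

Definition anti_pre_Lie (op : A -> A -> A) : Prop :=
  [/\ bilinear_op op, anti_pre_Lie_id1 op & anti_pre_Lie_id2 op].

Definition Lie_admissible (op : A -> A -> A) : Prop :=
  is_lie_bracket (commutator op).

Definition anti_pre_Lie_on (S : A -> Prop) (op : A -> A -> A) : Prop :=
  [/\ (forall (a : F) x y z, S x -> S y -> S z ->
          op (a *: x + y) z = a *: op x z + op y z /\
          op x (a *: y + z) = a *: op x y + op x z),
      (forall x y z, S x -> S y -> S z ->
          op x (op y z) - op y (op x z) = op (commutator op y x) z) &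
      (forall x y z, S x -> S y -> S z ->
          op (commutator op x y) z + op (commutator op y z) x
          + op (commutator op z x) y = 0)].
End OnSpace.

Section Rep.
Variables (g V : lmodType F).

Definition is_linear_map (T : V -> g) : Prop :=
  forall (a : F) u v, T (a *: u + v) = a *: T u + T v.

Definition is_representation (br : g -> g -> g) (rho : g -> V -> V) : Prop :=
  [/\ (forall x (a : F) u v, rho x (a *: u + v) = a *: rho x u + rho x v),
      (forall (a : F) x y v, rho (a *: x + y) v = a *: rho x v + rho y v) &
      (forall x y v, rho (br x y) v = rho x (rho y v) - rho y (rho x v))].

Definition anti_O_operator (br : g -> g -> g) (rho : g -> V -> V) (T : V -> g) : Prop :=
  is_linear_map T /\
  (forall u v, br (T u) (T v) = T (rho (T v) u - rho (T u) v)).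

Definition strong_anti_O_operator (br : g -> g -> g) (rho : g -> V -> V) (T : V -> g) : Prop :=
  anti_O_operator br rho T /\
  (forall u v w, rho (br (T u) (T v)) w + rho (br (T v) (T w)) u
                 + rho (br (T w) (T u)) v = 0).

Definition induced_op (rho : g -> V -> V) (T : V -> g) (u v : V) : V :=
  - rho (T u) v.
End Rep.
End Defs.

(* Main.v *)
Require Import Defs.
From HB Require Import structures.
From mathcomp Require Import all_boot all_algebra.
From Stdlib Require Import ClassicalEpsilon.
Import GRing.Theory.
Local Open Scope ring_scope.

Lemma jac_abs (Z : zmodType) (A1 A2 A3 B1 B2 B3 C1 C2 C3 D1 D2 D3 : Z) :
  A1 - B2 = D3 -> A2 - B3 = D1 -> A3 - B1 = D2 -> D3 + D2 + D1 = 0 ->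
  C3 + C1 + C2 = 0 ->
  (A1 - B1 - C1) + (A2 - B2 - C2) + (A3 - B3 - C3) = 0.
Proof.
move=> h1 h2 h3 hD hC.
have e1 : A1 = D3 + B2 by rewrite -h1 subrK.
have e2 : A2 = D1 + B3 by rewrite -h2 subrK.
have e3 : A3 = D2 + B1 by rewrite -h3 subrK.
rewrite e1 e2 e3.
have -> : D3 + B2 - B1 - C1 + (D1 + B3 - B2 - C2) + (D2 + B1 - B3 - C3)
  = (D3 + D2 + D1) - (C3 + C1 + C2) + (B2 - B2) + (B1 - B1) + (B3 - B3).
  rewrite !opprD !addrA.
  by rewrite [LHS](ACl (1*9*5*12*4*8*2*7*10*3*6*11)).
by rewrite hD hC !subrr !addr0.
Qed.

Lemma lin_facts (F : fieldType) (A B : lmodType F) (f : A -> B) :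
  (forall (a : F) x y, f (a *: x + y) = a *: f x + f y) ->
  [/\ f 0 = 0, (forall x, f (- x) = - f x), (forall x y, f (x + y) = f x + f y)
    & (forall a x, f (a *: x) = a *: f x)].
Proof.
move=> H.
have f0 : f 0 = 0.
  have := H 1 0 0; rewrite !scale1r addr0 => h.
  by apply: (@addrI _ (f 0)); rewrite addr0 -h.
split=> //.
- by move=> x; have := H (-1) x 0; rewrite addr0 f0 addr0 !scaleN1r.
- by move=> x y; have := H 1 x y; rewrite !scale1r.
- by move=> a x; have := H a x 0; rewrite !addr0 f0 addr0.
Qed.

Arguments lin_facts {F A B f}.
Lemma lin_sub (F : fieldType) (A B : lmodType F) (f : A -> B) :
  (forall (a : F) x y, f (a *: x + y) = a *: f x + f y) ->
  forall x y, f (x - y) = f x - f y.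
Proof. by move=> H x y; case: (lin_facts H) => _ hN hD _; rewrite hD hN. Qed.

Arguments lin_sub {F A B f}.
Theorem proposition2p14 (F : fieldType) (g V : vectType F)
    (br : g -> g -> g) (rho : g -> V -> V) (T : V -> g) :
  [pchar F] =i pred0 ->
  is_lie_bracket br ->
  is_representation br rho ->
  anti_O_operator br rho T ->
  let op := induced_op rho T in
  [/\ anti_pre_Lie_id1 op,
      (anti_pre_Lie op <-> strong_anti_O_operator br rho T) &
      (strong_anti_O_operator br rho T ->
        [/\ Lie_admissible op,
            (forall u v, T (commutator op u v) = br (T u) (T v)) &
            exists opg : g -> g -> g,
              (forall u v, opg (T u) (T v) = T (op u v)) /\
              anti_pre_Lie_on (fun x => exists u, x = T u) opg])].
Proof.
move=> _ [[_ brl2] _ _] [rho2 rho1 rhoh] [Tlin TO] op.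
have [T0 TN TD TZ] := lin_facts Tlin.
have TB := lin_sub Tlin.
have r2 x := lin_facts (rho2 x).
have r2B x := lin_sub (rho2 x).
have r1 v := lin_facts (fun a x y => rho1 a x y v).
have opE u v : op u v = - rho (T u) v by [].
have commE u v : commutator op u v = rho (T v) u - rho (T u) v.
  by rewrite /commutator !opE opprK addrC.
have TcommE u v : T (commutator op u v) = br (T u) (T v) by rewrite commE TO.
have opcomm u v w : op (commutator op u v) w = - rho (br (T u) (T v)) w.
  by rewrite opE TcommE.
have brA u v : br (T v) (T u) = - br (T u) (T v).
  by rewrite !TO -TN opprB.
have id1 : anti_pre_Lie_id1 op.
  move=> x y z; rewrite opcomm brA.
  have [_ hN _ _] := r1 z; rewrite hN opprK rhoh !opE.
  have [_ hN1 _ _] := r2 (T x); have [_ hN2 _ _] := r2 (T y).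
  by rewrite hN1 hN2 !opprK.
have bil : bilinear_op op.
  split.
  - move=> a x y z; rewrite !opE Tlin.
    have [_ _ hD hZ] := r1 z; rewrite hD hZ opprD scalerN //.
  - move=> a x y z; rewrite !opE rho2 opprD scalerN //.
have APL : anti_pre_Lie op <-> strong_anti_O_operator br rho T.
  split.
  - case=> _ _ id2; split; first by split.
    move=> u v w; have := id2 u v w; rewrite !opcomm -!opprD => /eqP.
    by rewrite oppr_eq0 => /eqP.
  - case=> _ hs; split=> // u v w.
    by rewrite !opcomm -!opprD hs oppr0.
split=> // hstrong.
have [_ id1' id2] : anti_pre_Lie op by apply/APL.
split=> //.
- split.
  + case: bil => b1 b2; split=> a x y z; rewrite /commutator.
    * by rewrite b1 b2 scalerBr addrACA opprD.
    * by rewrite b1 b2 scalerBr addrACA opprD.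
  + by move=> x; rewrite /commutator subrr.
  + move=> x y z.
    have addr x1 y1 z1 : op x1 (y1 - z1) = op x1 y1 - op x1 z1.
      case: bil => _ b2; exact: (lin_sub (fun a y z => b2 a x1 y z)).
    rewrite /commutator !addr.
    set C := commutator op.
    rewrite -/(C y z) -/(C z x) -/(C x y).
    apply: (@jac_abs _ _ _ _ _ _ _ _ _ _ (op (C z y) x) (op (C x z) y)
               (op (C y x) z)).
    * exact: id1.
    * exact: id1.
    * exact: id1.
    * exact: id2.
    * exact: id2.
- pose pre (y : g) : V := epsilon (inhabits 0) (fun u => T u = y).
  have preP v : T (pre (T v)) = T v.
    by apply: (epsilon_spec (inhabits 0) (fun u => T u = T v)); exists v.
  pose opg (x y : g) : g := T (- rho x (pre y)).
  have opgT u v : opg (T u) (T v) = T (op u v).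
    rewrite /opg opE; set v' := pre (T v).
    have Tk : T (v' - v) = 0 by rewrite TB preP subrr.
    have hk : T (rho (T u) (v' - v)) = 0.
      have := TO u (v' - v); rewrite Tk.
      have [b0 _ _ _] := r1 u; rewrite b0 sub0r TN.
      have [b0' _ _ _] := lin_facts (fun a y z => brl2 a (T u) y z); rewrite b0' => /esym/eqP.
      by rewrite oppr_eq0 => /eqP.
    have [_ hN hD _] := r2 (T u).
    by rewrite -[v'](subrK v) hD opprD TD TN hk oppr0 add0r.
  clearbody opg.
  have cg u v : commutator opg (T u) (T v) = T (commutator op u v).
    by rewrite /commutator !opgT TB.
  exists opg; split=> //.
  case: bil => b1 b2.
  split.
  - move=> a x y z [u ->] [v ->] [w ->].
    have e1 : a *: T u + T v = T (a *: u + v) by rewrite TD TZ.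
    have e2 : a *: T v + T w = T (a *: v + w) by rewrite TD TZ.
    by rewrite e1 e2 !opgT b1 b2 !TD !TZ.
  - move=> x y z [u ->] [v ->] [w ->].
    by rewrite cg !opgT -TB id1.
  - move=> x y z [u ->] [v ->] [w ->].
    by rewrite !cg !opgT -!TD id2 T0.
Qed.
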